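(* The number of $n$-dimensional Matoušek-type USOs is $2^{\Theta(n^2)}$.
   Context: All vectors and matrices are over $GF(2)$; $\oplus$ denotes xor. An orientation of the $n$-dimensional hypercube $\{0,1\}^n$ is given by an outmap $o:\{0,1\}^n\to\{0,1\}^n$, the edge $\{v,v\oplus e_i\}$ being directed away from $v$ iff $o(v)_i=1$. An $n$-dimensional Matoušek-type USO is an orientation of the form $o(v)=M(v\oplus s)$ for all $v$, where $M=PAP^T$ for some permutation matrix $P$ and some invertible upper-triangular matrix $A\in\{0,1\}^{n\times n}$, and $s\in\{0,1\}^n$. Two Matoušek-type USOs are counted as different iff their outmap functions differ. *)

(* Defs.v *)
From HB Require Import structures.
From mathcomp Require Import all_boot all_order all_algebra all_fingroup.
From mathcomp Require Import all_classical all_reals all_analysis.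
Set Implicit Arguments. Unset Strict Implicit. Unset Printing Implicit Defensive.
Import GRing.Theory Num.Theory.
Local Open Scope ring_scope.

(* Vectors of {0,1}^n are column vectors over GF(2) = 'F_2; xor is +. *)
Notation vec n := 'cV['F_2]_n.
Notation outmap n := {ffun vec n -> vec n}.

Definition upper_trig n (A : 'M['F_2]_n) : bool :=
  [forall i : 'I_n, forall j : 'I_n, (j < i)%N ==> (A i j == 0)].

Definition matousek_outmap n (p : 'S_n) (A : 'M['F_2]_n) (s : vec n) : outmap n :=
  [ffun v => (perm_mx p *m A *m (perm_mx p)^T) *m (v + s)].

Definition is_matousek n (o : outmap n) : bool :=
  [exists p : 'S_n, exists A : 'M['F_2]_n, exists s : vec n,
     [&& upper_trig A, A \in unitmx & o == matousek_outmap p A s]].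

Definition num_matousek (n : nat) : nat := #|[set o : outmap n | is_matousek o]|.

(* Main.v *)
Require Import Defs.
From HB Require Import structures.
From mathcomp Require Import all_boot all_order all_algebra all_fingroup.
From mathcomp Require Import all_classical all_reals all_analysis.
From mathcomp Require Import zify.
Import Order.TTheory GRing.Theory Num.Theory.
Local Open Scope ring_scope.

Definition Dset n := [set x : 'I_n * 'I_n | (x.1 < x.2)%N].

Lemma card_Dset n : (2 * #|Dset n| + n = n * n)%N.
Proof.
set D := Dset n.
pose sw := fun x : 'I_n * 'I_n => (x.2, x.1).
have swK : involutive sw by case.
set D' := sw @: D.
set E := [set (i, i) | i : 'I_n].
have cD' : #|D'| = #|D| by apply: card_imset; exact: inv_inj.
have cE : #|E| = n.
  rewrite card_imset ?card_ord //; by move=> i j [].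
have hT : #|[set: 'I_n * 'I_n]| = (n * n)%N by rewrite cardsT card_prod card_ord.
have inD' : forall x, (x \in D') = (x.2 < x.1)%N.
  move=> x; apply/imsetP/idP => [[y]|h].
    by rewrite inE => hy ->.
  by exists (sw x); rewrite ?swK // inE.
have inE' : forall x, (x \in E) = (x.1 == x.2).
  move=> [a b]; apply/imsetP/idP => [[y _ [-> ->]]//|/= /eqP ->].
  by exists b.
have U1 : D' :|: E = ~: D.
  apply/setP => -[a b]; rewrite !inE inD' inE' /=.
  rewrite -val_eqE /=; by case: (ltngtP a b).
have I1 : D' :&: E = finset.set0.
  apply/setP => -[a b]; rewrite !inE inD' inE' /=.
  rewrite -val_eqE /=; by case: (ltngtP a b).
have h2 := cardsUI D' E; rewrite U1 I1 cards0 addn0 cD' cE in h2.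
move: (cardsC D) => h1. rewrite card_prod card_ord in h1.
lia.
Qed.

Lemma fact_le n : (n`! <= 2 ^ (n * n))%N.
Proof.
elim: n => [//|n IH].
rewrite factS.
have h1 : (n.+1 <= 2 ^ n.+1)%N by apply: ltnW; apply: ltn_expl.
have : (n.+1 * n`! <= 2 ^ n.+1 * 2 ^ (n * n))%N by apply: leq_mul.
move=> h; apply: (leq_trans h); rewrite -expnD leq_pexp2l //.
lia.
Qed.

Definition phi n (B : {ffun 'I_n * 'I_n -> 'F_2}) : 'M['F_2]_n :=
  \matrix_(i, j) (if i == j then 1 else if (i < j)%N then B (i, j) else 0).

Lemma psiE n (B : {ffun 'I_n * 'I_n -> 'F_2}) (v : vec n) : matousek_outmap 1 (@phi n B) 0 v = @phi n B *m v.
Proof. by rewrite ffunE perm_mx1 trmx1 mul1mx mulmx1 addr0. Qed.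

Lemma phi_mat n (B : {ffun 'I_n * 'I_n -> 'F_2}) : is_matousek (matousek_outmap 1 (@phi n B) 0).
Proof.
apply/existsP; exists (1%g : 'S_n); apply/existsP; exists (@phi n B); apply/existsP; exists 0.
rewrite eqxx andbT; apply/andP; split.
  apply/forallP => i; apply/forallP => j; apply/implyP => h.
  rewrite mxE; have -> : (i == j) = false.
    by apply/negbTE; rewrite -val_eqE /= neq_ltn h orbT.
  by rewrite ltnNge (ltnW h).
rewrite unitmxE -det_tr det_trig.
  rewrite big1 ?unitr1 // => i _; by rewrite !mxE eqxx.
apply/is_trig_mxP => i j h; rewrite !mxE.
have -> : (j == i) = false.
  by apply/negbTE; rewrite -val_eqE /= neq_ltn h orbT.
by rewrite ltnNge (ltnW h).
Qed.

Lemma lower n : (2 ^ #|Dset n| <= num_matousek n)%N.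
Proof.
pose psi B := matousek_outmap 1 (@phi n B) 0.
have inj : {in pffun_on (0:'F_2) (Dset n) predT &, injective psi}.
  move=> B1 B2 /pffun_onP [s1 _] /pffun_onP [s2 _] e.
  have ee : forall i j, @phi n B1 i j = @phi n B2 i j.
    move=> i j.
    have := congr1 (fun o : outmap n => o (delta_mx j 0) i 0) e.
    by rewrite /= /psi !psiE -!colE !mxE.
  apply/ffunP => -[i j].
  case: (ltnP i j) => h.
    have ne : (i == j) = false by apply/negbTE; rewrite -val_eqE /= neq_ltn h.
    by have := ee i j; rewrite !mxE ne h.
  have z : forall B : {ffun 'I_n * 'I_n -> 'F_2}, 0.-support B \subset Dset n -> B (i, j) = 0.
    move=> B s; apply/eqP; apply: contraTT h => hB.
    by have := (fintype.subsetP s) (i, j) hB; rewrite inE -ltnNge.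
  by rewrite z // z.
have c : #|psi @: pffun_on (0:'F_2) (Dset n) predT| = (2 ^ #|Dset n|)%N.
  by rewrite card_in_imset // card_pffun_on card_Fp.
rewrite -c /num_matousek; apply: subset_leq_card; apply/fintype.subsetP => o /imsetP [B _ ->].
by rewrite inE phi_mat.
Qed.

Lemma upper n : (num_matousek n <= 2 ^ (3 * (n * n)))%N.
Proof.
pose f (x : 'S_n * 'M['F_2]_n * vec n) := matousek_outmap x.1.1 x.1.2 x.2.
apply: (@leq_trans #|f @: [set: 'S_n * 'M['F_2]_n * vec n]|).
  apply: subset_leq_card; apply/fintype.subsetP => o; rewrite inE.
  case/existsP => p /existsP [A /existsP [s /and3P [_ _ /eqP ->]]].
  by apply/imsetP; exists (p, A, s).
apply: (leq_trans (leq_imset_card _ _)).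
rewrite cardsT !card_prod card_Sn !card_mx card_Fp //.
have h1 := fact_le n.
have h2 : (2 ^ (n * 1) <= 2 ^ (n * n))%N.
  by rewrite leq_pexp2l // muln1; clear f h1; case: n => // n; rewrite leq_pmulr.
have -> : (3 * (n * n) = n * n + n * n + n * n)%N by lia.
rewrite !expnD.
by apply: leq_mul; first apply: leq_mul.
Qed.

Theorem lemma9 (R : realType) :
  exists (c1 c2 : R) (N : nat), 0 < c1 /\ 0 < c2 /\
    forall n : nat, (N <= n)%N ->
      (2 : R) `^ (c1 * (n ^ 2)%:R) <= (num_matousek n)%:R /\
      (num_matousek n)%:R <= (2 : R) `^ (c2 * (n ^ 2)%:R).
Proof.
exists (4^-1), 3, 2%N; split; first by rewrite invr_gt0.
split=> // n hn; split.
  have e : (2:R) `^ (#|Dset n|%:R) = 2 ^+ #|Dset n| by rewrite powR_mulrn.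
  apply: (@le_trans _ _ ((2 : R) `^ (#|Dset n|%:R))).
    apply: ler_powR; first by rewrite ler1n.
    have h := card_Dset n.
    have hn2 : (n ^ 2 <= 4 * #|Dset n|)%N by nia.
    rewrite -(ler_nat R) natrM in hn2.
    by rewrite ler_pdivrMl ?ltr0n.
  by rewrite e -natrX ler_nat lower.
have := upper n; rewrite -(ler_nat R) natrX => h.
apply: (le_trans h).
have e : (2:R) `^ ((3 * (n * n))%N%:R) = 2 ^+ (3 * (n * n)) by rewrite powR_mulrn.
by rewrite -e natrM mulnn.
Qed.
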